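(* Let $(N,p)$ be a majorant of a second-order polynomial $P$. Define $p_i\colon\mathbb N^{\mathbb N}\times\mathbb N\to\mathbb N$ recursively by $p_0(l,n)=p(n)$ and $p_{i+1}(l,n)=p(\max\{n,l(p_i(l,n))\})$. Then for every monotone $l\colon\mathbb N\to\mathbb N$ and every $n\in\mathbb N$, $P(l,n)\le p_N(l,n)$.
   Context: Second-order polynomials are the smallest class of functions $P\colon\mathbb N^{\mathbb N}\times\mathbb N\to\mathbb N$ that contains all $(l,n)\mapsto p(n)$ for polynomials $p$ with natural-number coefficients, and is closed under pointwise sum, pointwise product, and $P\mapsto P^+$ with $P^+(l,n)=l(P(l,n))$. A polynomial tree is a finite rooted tree in which each node is labeled by a polynomial in $\mathbb N[X_0,\ldots,X_k]$, $k$ being the number of children of that node, with the children of each node linearly ordered. Recursively assign functions to nodes: a leaf labeled $t$ gets $(l,n)\mapsto t(n)$; a node labeled $t$ with children (in order) assigned $P_1,\ldots,P_k$ gets $(l,n)\mapsto t(n,l(P_1(l,n)),\ldots,l(P_k(l,n)))$. The tree is a description of $P$ if $P$ is assigned to the root. A pair $(N,p)$ with $N\in\mathbb N$ and $p\colon\mathbb N\to\mathbb N$ is a majorant of $P$ if $p(n)\ge n$ for all $n$ and there is a description $T$ of $P$ such that $N$ is the height of $T$ (a single-node tree has height $0$) and for every $n$ and every node $t$ of $T$, $p(n)\ge t(n,\ldots,n)$. *)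

(* Defs.v *)
From Stdlib Require Import Arith List.
Import ListNotations.

(* Polynomial expressions with natural-number coefficients in variables
   X_0, X_1, ...  Every element of N[X_0,...,X_k] is denoted by such an
   expression whose variables have index <= k. *)
Inductive pexpr : Type :=
| PConst : nat -> pexpr
| PVar : nat -> pexpr
| PAdd : pexpr -> pexpr -> pexpr
| PMul : pexpr -> pexpr -> pexpr.

Fixpoint peval (env : nat -> nat) (e : pexpr) : nat :=
  match e with
  | PConst c => c
  | PVar i => env i
  | PAdd a b => peval env a + peval env b
  | PMul a b => peval env a * peval env b
  end.

Fixpoint pvars_le (k : nat) (e : pexpr) : Prop :=
  match e with
  | PConst _ => True
  | PVar i => i <= k
  | PAdd a b => pvars_le k a /\ pvars_le k b
  | PMul a b => pvars_le k a /\ pvars_le k b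
  end.

Inductive SOP : ((nat -> nat) -> nat -> nat) -> Prop :=
| SOP_poly (e : pexpr) : pvars_le 0 e -> SOP (fun l n => peval (fun _ => n) e)
| SOP_add P Q : SOP P -> SOP Q -> SOP (fun l n => P l n + Q l n)
| SOP_mul P Q : SOP P -> SOP Q -> SOP (fun l n => P l n * Q l n)
| SOP_plus P : SOP P -> SOP (fun l n => l (P l n)).

Inductive ptree : Type :=
| PNode : pexpr -> list ptree -> ptree.

Fixpoint tree_wf (T : ptree) : Prop :=
  match T with
  | PNode t ch => pvars_le (length ch) t /\ fold_right and True (map tree_wf ch)
  end.

(* The function assigned to a node: t(n, l(P_1(l,n)), ..., l(P_k(l,n))). *)
Fixpoint tree_fun (T : ptree) (l : nat -> nat) (n : nat) : nat :=
  match T with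
  | PNode t ch =>
      peval (fun i => match i with
                      | 0 => n
                      | S j => l (nth j (map (fun c => tree_fun c l n) ch) 0)
                      end) t
  end.

Fixpoint tree_height (T : ptree) : nat :=
  match T with
  | PNode _ [] => 0
  | PNode _ ch => S (fold_right max 0 (map tree_height ch))
  end.

Fixpoint tree_bounded (p : nat -> nat) (T : ptree) : Prop :=
  match T with
  | PNode t ch => (forall n, peval (fun _ => n) t <= p n)
                  /\ fold_right and True (map (tree_bounded p) ch)
  end.

Definition description (T : ptree) (P : (nat -> nat) -> nat -> nat) : Prop :=
  tree_wf T /\ forall l n, tree_fun T l n = P l n.

Definition majorant (N : nat) (p : nat -> nat) (P : (nat -> nat) -> nat -> nat) : Prop :=
  (forall n, n <= p n) /\
  exists T, description T P /\ tree_height T = N /\ tree_bounded p T.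

Fixpoint p_iter (p : nat -> nat) (i : nat) (l : nat -> nat) (n : nat) : nat :=
  match i with
  | 0 => p n
  | S i' => p (Nat.max n (l (p_iter p i' l n)))
  end.

Definition monotone (l : nat -> nat) : Prop := forall a b, a <= b -> l a <= l b.

(* Main.v *)
Require Import Defs.
From Stdlib Require Import Arith List Lia.
Import ListNotations.

Lemma peval_mono (k : nat) (e : pexpr) (env1 env2 : nat -> nat) :
  (forall i, i <= k -> env1 i <= env2 i) -> pvars_le k e ->
  peval env1 e <= peval env2 e.
Proof.
  intros H; induction e; simpl; intros Hv.
  - lia.
  - apply H; exact Hv.
  - destruct Hv as [H1 H2]; specialize (IHe1 H1); specialize (IHe2 H2); lia.
  - destruct Hv as [H1 H2]; specialize (IHe1 H1); specialize (IHe2 H2).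
    apply Nat.mul_le_mono; assumption.
Qed.

Lemma fold_and_In {A} (P : A -> Prop) (l : list A) :
  fold_right and True (map P l) -> forall x, In x l -> P x.
Proof.
  induction l; simpl; intros H x Hx; [contradiction|].
  destruct H as [H1 H2]; destruct Hx as [<-|Hx]; auto.
Qed.

Lemma fold_max_In (l : list ptree) :
  forall c, In c l -> tree_height c <= fold_right max 0 (map tree_height l).
Proof.
  induction l; simpl; intros c Hc; [contradiction|].
  destruct Hc as [<-|Hc]; [lia|]. specialize (IHl c Hc); lia.
Qed.

Definition Aseq (p : nat -> nat) (l : nat -> nat) (n h : nat) : nat :=
  match h with 0 => n | S h' => Nat.max n (l (p_iter p h' l n)) end.

Lemma p_iter_A p l n h : p_iter p h l n = p (Aseq p l n h).
Proof. destruct h; reflexivity. Qed.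

Lemma n_le_A p l n h : n <= Aseq p l n h.
Proof. destruct h; simpl; lia. Qed.

Lemma claim (p : nat -> nat) (l : nat -> nat) (n : nat) (Hl : monotone l) :
  forall h T, tree_height T <= h -> tree_wf T -> tree_bounded p T ->
  forall k, Aseq p l n h <= k -> tree_fun T l n <= p k.
Proof.
  induction h as [|h IH]; intros [t ch] Hh Hwf Hb k Hk;
    simpl in Hwf, Hb |- *; destruct Hwf as [Hv Hwfc]; destruct Hb as [Hbt Hbc].
  - destruct ch as [|c ch']; [|simpl in Hh; lia].
    eapply Nat.le_trans; [|apply (Hbt k)].
    apply (peval_mono 0); [|exact Hv].
    intros i Hi. destruct i; [simpl in Hk; lia | lia].
  - eapply Nat.le_trans; [|apply (Hbt k)].
    apply (peval_mono (length ch)); [|exact Hv].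
    intros i Hi. destruct i as [|j].
    + pose proof (n_le_A p l n (S h)); lia.
    + assert (Hj : j < length ch) by lia.
      rewrite nth_indep with (d' := (fun c => tree_fun c l n) (PNode (PConst 0) []))
        by (rewrite length_map; lia).
      rewrite (map_nth (fun c => tree_fun c l n) ch (PNode (PConst 0) []) j).
      set (c := nth j ch (PNode (PConst 0) [])).
      assert (Hin : In c ch) by (apply nth_In; exact Hj).
      assert (Hc : tree_fun c l n <= p_iter p h l n).
      { rewrite p_iter_A. apply IH; auto.
        - pose proof (fold_max_In ch c Hin).
          destruct ch; [contradiction|]. simpl in Hh |- *. simpl in H. lia.
        - exact (fold_and_In _ _ Hwfc c Hin).
        - exact (fold_and_In _ _ Hbc c Hin). }
      apply Hl in Hc. simpl in Hk. lia.
Qed.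

Theorem mainTheorem5 :
  forall (P : (nat -> nat) -> nat -> nat) (N : nat) (p : nat -> nat),
    SOP P -> majorant N p P ->
    forall (l : nat -> nat), monotone l ->
    forall n : nat, P l n <= p_iter p N l n.
Proof.
  intros P N p _ [_ [T [[Hwf Hf] [Hh Hb]]]] l Hl n.
  rewrite <- Hf, p_iter_A.
  apply (claim p l n Hl N T); auto; lia.
Qed.
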